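(* Fix a realization of the field $\{h_v\}$, $\beta>0$, $N=2^n$ with $n\ge10$, $\Delta>0$, $\Delta'\ge0$, a set $S\subset\Lambda_N$ with $\Lambda_{N/8}\subset S$, $\Gamma=\partial S$, and $\tau^+,\tau^-\in\{-1,1\}^\Gamma$ with $\tau^+\ge\tau^-$. Then for any nonempty increasing set $\Omega^+\subset\{-1,1\}^S$ and any nonempty decreasing set $\Omega^-\subset\{-1,1\}^S$, $$\Delta\int_0^1\big(m^{S,\tau^+,t}_{\Omega^+}-m^{S,\tau^-,t}_{\Omega^-}\big)\,dt\leq8\sum_{v\in\Gamma}(\tau^+_v-\tau^-_v)-\frac1\beta\Big(\log\mu^{S,\tau^+,0}(\Omega^+)+\log\mu^{S,\tau^-,1}(\Omega^-)\Big).$$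
   Context: Write $u\sim v$ if $|u-v|_1=1$; $\partial A=\{v\in\mathbb Z^2\setminus A:u\sim v\text{ for some }u\in A\}$; $\Lambda_r=\{v\in\mathbb Z^2:|v|_\infty\le r\}$. For $0\le t\le1$ define the field $h^{(t)}_v=h_v+\Delta'$ for $v\in\Lambda_N\setminus\Lambda_{N/8}$ and $h^{(t)}_v=h_v+t\Delta$ for $v\in\Lambda_{N/8}$. For $\tau\in\{-1,1\}^\Gamma$ and $\sigma\in\{-1,1\}^S$, $H^{S,\tau,t}(\sigma)=-\big(\sum_{u\sim v,\,u,v\in S}\sigma_u\sigma_v+\sum_{u\sim v,\,u\in S,v\in\Gamma}\sigma_u\tau_v+\sum_{u\in S}\sigma_uh^{(t)}_u\big)$ and $\mu^{S,\tau,t}(\sigma)\propto e^{-\beta H^{S,\tau,t}(\sigma)}$. For $\Omega\subset\{-1,1\}^S$ with $\mu^{S,\tau,t}(\Omega)>0$, $\mu^{S,\tau,t}_\Omega=\mu^{S,\tau,t}(\cdot\mid\Omega)$ and $m^{S,\tau,t}_\Omega=\sum_{v\in\Lambda_{N/32}}\langle\sigma_v\rangle_{\mu^{S,\tau,t}_\Omega}$. A set $\Omega\subset\{-1,1\}^S$ is increasing if $\sigma\in\Omega$ and $\sigma'\ge\sigma$ imply $\sigma'\in\Omega$; it is decreasing if its complement is increasing. *)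

(* Defs.v *)
From HB Require Import structures.
From mathcomp Require Import all_boot all_order all_algebra finmap.
From mathcomp Require Import all_classical all_reals all_analysis.
Set Implicit Arguments. Unset Strict Implicit. Unset Printing Implicit Defensive.
Import Order.TTheory GRing.Theory Num.Theory.
Local Open Scope fset_scope.
Local Open Scope ring_scope.

Definition pt := (int * int)%type.

Definition shift (u d : pt) : pt := (u.1 + d.1, u.2 + d.2).
(* the four unit vectors: v ~ u iff v = shift u d for some d in dirs *)
Definition dirs : seq pt := [:: (1, 0); (-1, 0); (0, 1); (0, -1)].
(* half of them: every unordered edge {u, v} is counted once as (u, shift u d) *)
Definition half_dirs : seq pt := [:: (1, 0); (0, 1)].

Definition inbox (r : nat) (v : pt) : bool := (`|v.1|%N <= r)%N && (`|v.2|%N <= r)%N.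
Definition coords (r : nat) : seq int := [seq (i%:Z - r%:Z) | i <- iota 0 (r.*2.+1)].
Definition box_seq (r : nat) : seq pt := [seq (x, y) | x <- coords r, y <- coords r].

Definition bdry (S : {fset pt}) : seq pt :=
  undup [seq v <- [seq shift u d | u <- enum_fset S, d <- dirs] | v \notin S].

Definition spin {R : realType} (b : bool) : R := if b then 1 else -1.

Definition config (S : {fset pt}) := {ffun S -> bool}.

(* sigma_v for v in Z^2 (0 if v is not in S; only used for v in S) *)
Definition sigma_at {R : realType} (S : {fset pt}) (s : config S) (v : pt) : R :=
  match insub v : option S with Some x => spin (s x) | None => 0 end.

Definition hfield {R : realType} (h : pt -> R) (N : nat) (Delta Delta' t : R) (v : pt) : R :=
  if inbox (N %/ 8) v then h v + t * Delta else h v + Delta'.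

Definition ham {R : realType} (h : pt -> R) (N : nat) (Delta Delta' : R)
  (S : {fset pt}) (tau : pt -> bool) (t : R) (s : config S) : R :=
  - ( \sum_(x : S) \sum_(d <- half_dirs)
        (if shift (val x) d \in S then spin (s x) * sigma_at s (shift (val x) d) else 0)
    + \sum_(x : S) \sum_(d <- dirs)
        (if shift (val x) d \notin S then spin (s x) * spin (tau (shift (val x) d)) else 0)
    + \sum_(x : S) spin (s x) * hfield h N Delta Delta' t (val x)).

Definition weight {R : realType} (beta : R) (h : pt -> R) (N : nat) (Delta Delta' : R)
  (S : {fset pt}) (tau : pt -> bool) (t : R) (s : config S) : R :=
  expR (- beta * ham h N Delta Delta' tau t s).

Definition mu {R : realType} (beta : R) (h : pt -> R) (N : nat) (Delta Delta' : R)
  (S : {fset pt}) (tau : pt -> bool) (t : R) (Om : pred (config S)) : R :=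
  (\sum_(s : config S | Om s) weight beta h N Delta Delta' tau t s)
  / (\sum_(s : config S) weight beta h N Delta Delta' tau t s).

Definition mag {R : realType} (beta : R) (h : pt -> R) (N : nat) (Delta Delta' : R)
  (S : {fset pt}) (tau : pt -> bool) (t : R) (Om : pred (config S)) : R :=
  \sum_(v <- box_seq (N %/ 32))
    ((\sum_(s : config S | Om s) sigma_at s v * weight beta h N Delta Delta' tau t s)
     / (\sum_(s : config S | Om s) weight beta h N Delta Delta' tau t s)).

Definition cle (S : {fset pt}) (s s' : config S) : bool := [forall x, s x ==> s' x].

Definition increasing (S : {fset pt}) (Om : pred (config S)) : Prop :=
  forall s s' : config S, Om s -> cle s s' -> Om s'.
Definition decreasing (S : {fset pt}) (Om : pred (config S)) : Prop :=
  increasing (predC Om).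

(* Main.v *)
Require Import Defs.
From HB Require Import structures.
From mathcomp Require Import all_boot all_order all_algebra finmap.
From mathcomp Require Import all_classical all_reals all_analysis.
From mathcomp Require Import ring lra zify.
Require Import Defs.
Import Order.TTheory GRing.Theory Num.Theory.
Local Open Scope ring_scope.
Set Implicit Arguments. Unset Strict Implicit. Unset Printing Implicit Defensive.


Lemma AD1 (R : realType) (a0 a1 b0 b1 c0 c1 d0 d1 : R) :
  0 <= a0 -> 0 <= a1 -> 0 <= b0 -> 0 <= b1 -> 0 <= c0 -> 0 <= c1 -> 0 <= d0 -> 0 <= d1 ->
  a0 * b0 <= c0 * d0 -> a0 * b1 <= c1 * d0 -> a1 * b0 <= c1 * d0 -> a1 * b1 <= c1 * d1 ->
  (a0 + a1) * (b0 + b1) <= (c0 + c1) * (d0 + d1).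
Proof.
move=> *.
have [P0|Ppos] := eqVneq (c1 * d0) 0.
  have h1 : a0 * b1 = 0 by apply/le_anti; rewrite mulr_ge0 // andbT -P0.
  have h2 : a1 * b0 = 0 by apply/le_anti; rewrite mulr_ge0 // andbT -P0.
  have : 0 <= c0 * d1 by rewrite mulr_ge0.
  nra.
have PP : 0 < c1 * d0 by rewrite lt_def Ppos mulr_ge0.
have key : (a0 * b0) * (a1 * b1) <= (c0 * d0) * (c1 * d1).
  by apply: ler_pM => //; rewrite mulr_ge0.
have key2 : (a0 * b1) * (a1 * b0) <= (c1 * d0) * (c0 * d1).
  have -> : (a0 * b1) * (a1 * b0) = (a0 * b0) * (a1 * b1) by ring.
  have -> : (c1 * d0) * (c0 * d1) = (c0 * d0) * (c1 * d1) by ring.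
  exact key.
have key3 : 0 <= (c1 * d0 - a0 * b1) * (c1 * d0 - a1 * b0).
  by apply: mulr_ge0; rewrite subr_ge0.
suff : (c1 * d0) * ((a0 + a1) * (b0 + b1)) <= (c1 * d0) * ((c0 + c1) * (d0 + d1)).
  by rewrite ler_pM2l.
nra.
Qed.

Definition fjoin (I : finType) (a b : {ffun I -> bool}) : {ffun I -> bool} := [ffun i => a i || b i].
Definition fmeet (I : finType) (a b : {ffun I -> bool}) : {ffun I -> bool} := [ffun i => a i && b i].
Definition fupd (I : finType) (x : {ffun I -> bool}) (i : I) (c : bool) : {ffun I -> bool} :=
  [ffun j => if j == i then c else x j].
Definition Mg (R : realType) (I : finType) (i : I) (g : {ffun I -> bool} -> R) x :=
  g (fupd x i false) + g (fupd x i true).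
Fixpoint marg (R : realType) (I : finType) (l : seq I) (g : {ffun I -> bool} -> R) :=
  if l is i :: l' then Mg i (marg l' g) else g.

Definition ADcond (R : realType) (I : finType) (al be ga de : {ffun I -> bool} -> R) :=
  forall a b, al a * be b <= ga (fjoin a b) * de (fmeet a b).

Lemma fupd_join (I : finType) a b (i : I) c d :
  fjoin (fupd a i c) (fupd b i d) = fupd (fjoin a b) i (c || d).
Proof. by apply/ffunP => j; rewrite !ffunE; case: (j == i); rewrite ?ffunE. Qed.
Lemma fupd_meet (I : finType) a b (i : I) c d :
  fmeet (fupd a i c) (fupd b i d) = fupd (fmeet a b) i (c && d).
Proof. by apply/ffunP => j; rewrite !ffunE; case: (j == i); rewrite ?ffunE. Qed.

Lemma ADcond_M (R : realType) (I : finType) (i : I) (al be ga de : {ffun I -> bool} -> R) :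
  (forall x, 0 <= al x) -> (forall x, 0 <= be x) -> (forall x, 0 <= ga x) -> (forall x, 0 <= de x) ->
  ADcond al be ga de -> ADcond (Mg i al) (Mg i be) (Mg i ga) (Mg i de).
Proof.
move=> h1 h2 h3 h4 H a b; rewrite /Mg.
apply: AD1 => //; rewrite ?fupd_join ?fupd_meet.
- by have := H (fupd a i false) (fupd b i false); rewrite fupd_join fupd_meet.
- by have := H (fupd a i false) (fupd b i true); rewrite fupd_join fupd_meet.
- by have := H (fupd a i true) (fupd b i false); rewrite fupd_join fupd_meet.
- by have := H (fupd a i true) (fupd b i true); rewrite fupd_join fupd_meet.
Qed.

Lemma marg_ge0 (R : realType) (I : finType) (l : seq I) g :
  (forall x, 0 <= g x) -> forall x, 0 <= marg l g x :> R.
Proof. by elim: l => //= i l IH hg x; rewrite /Mg addr_ge0 ?IH. Qed.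

Lemma ADcond_marg (R : realType) (I : finType) (l : seq I) (al be ga de : {ffun I -> bool} -> R) :
  (forall x, 0 <= al x) -> (forall x, 0 <= be x) -> (forall x, 0 <= ga x) -> (forall x, 0 <= de x) ->
  ADcond al be ga de -> ADcond (marg l al) (marg l be) (marg l ga) (marg l de).
Proof.
move=> h1 h2 h3 h4 H; elim: l => //= i l IH.
by apply: ADcond_M => //; apply: marg_ge0.
Qed.

Lemma marg_const (R : realType) (I : finType) (l : seq I) (g : {ffun I -> bool} -> R) (x y : {ffun I -> bool}) :
  (forall j, j \notin l -> x j = y j) -> marg l g x = marg l g y.
Proof.
elim: l x y => [|i l IH] x y /= H.
  by congr g; apply/ffunP => j; apply: H.
rewrite /Mg; congr (_ + _); apply: IH => j jl; rewrite !ffunE;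
  case: eqP => // /eqP ji; apply: H; rewrite in_cons negb_or jl andbT //.
Qed.

Lemma sum_Mg (R : realType) (I : finType) (i : I) (g : {ffun I -> bool} -> R) :
  \sum_x Mg i g x = 2 * \sum_x g x.
Proof.
pose fl (x : {ffun I -> bool}) := fupd x i (~~ x i).
have flK : involutive fl.
  by move=> x; apply/ffunP => j; rewrite /fl !ffunE; case: eqP => // ->; rewrite eqxx negbK.
have -> : \sum_x Mg i g x = \sum_x (g x + g (fl x)).
  apply: eq_bigr => x _; rewrite /Mg /fl.
  have e : forall c, x i = c -> fupd x i c = x.
    by move=> c <-; apply/ffunP => j; rewrite ffunE; case: eqP => // ->.
  by case E: (x i); rewrite (e _ E) // addrC.
have e : \sum_x g (fl x) = \sum_x g x by rewrite [RHS](reindex_inj (inv_inj flK)).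
by rewrite big_split /= e -mulr2n mulr_natl.
Qed.

Lemma sum_marg (R : realType) (I : finType) (l : seq I) (g : {ffun I -> bool} -> R) :
  \sum_x marg l g x = 2 ^+ size l * \sum_x g x.
Proof.
by elim: l => [|i l IH] /=; rewrite ?expr0 ?mul1r // sum_Mg IH exprS mulrA.
Qed.

Theorem AD (R : realType) (I : finType) (al be ga de : {ffun I -> bool} -> R) :
  (forall x, 0 <= al x) -> (forall x, 0 <= be x) -> (forall x, 0 <= ga x) -> (forall x, 0 <= de x) ->
  ADcond al be ga de ->
  (\sum_x al x) * (\sum_x be x) <= (\sum_x ga x) * (\sum_x de x).
Proof.
move=> h1 h2 h3 h4 H.
set l := enum I.
have Hl := ADcond_marg l h1 h2 h3 h4 H.
pose x0 : {ffun I -> bool} := [ffun=> false].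
have cst : forall g : {ffun I -> bool} -> R, \sum_x marg l g x = (\sum_(x : {ffun I -> bool}) (1:R)) * marg l g x0.
  move=> g; rewrite mulr_suml; apply: eq_bigr => x _; rewrite mul1r.
  by apply: marg_const => j; rewrite mem_enum.
have jx : fjoin x0 x0 = x0 by apply/ffunP => j; rewrite !ffunE.
have mx : fmeet x0 x0 = x0 by apply/ffunP => j; rewrite !ffunE.
have := Hl x0 x0; rewrite jx mx => key.
have c0 : 0 < (2 : R) ^+ size l by rewrite exprn_gt0.
rewrite -(ler_pM2l (mulr_gt0 c0 c0)).
have -> : (2 ^+ size l * 2 ^+ size l) * ((\sum_x al x) * (\sum_x be x)) =
   (\sum_x marg l al x) * (\sum_x marg l be x) by rewrite !sum_marg; ring.
have -> : (2 ^+ size l * 2 ^+ size l) * ((\sum_x ga x) * (\sum_x de x)) =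
   (\sum_x marg l ga x) * (\sum_x marg l de x) by rewrite !sum_marg; ring.
rewrite !cst.
have K0 : 0 <= \sum_(x : {ffun I -> bool}) (1:R) by apply: sumr_ge0.
have KK := mulr_ge0 K0 K0. nra.
Qed.

Lemma split_spin (R : realType) (I : finType) (i : I) (m : {ffun I -> bool} -> R) :
  \sum_(s : {ffun I -> bool}) spin (s i) * m s = \sum_(s : {ffun I -> bool}) (if s i then m s else 0) - \sum_(s : {ffun I -> bool}) (if ~~ s i then m s else 0).
Proof. by rewrite -sumrB; apply: eq_bigr => s _; rewrite /spin; case: (s i) => /=; ring. Qed.

Lemma split_tot (R : realType) (I : finType) (i : I) (m : {ffun I -> bool} -> R) :
  \sum_(s : {ffun I -> bool}) m s = \sum_(s : {ffun I -> bool}) (if s i then m s else 0) + \sum_(s : {ffun I -> bool}) (if ~~ s i then m s else 0).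
Proof. by rewrite -big_split; apply: eq_bigr => s _; case: (s i) => /=; ring. Qed.

Lemma holley_site (R : realType) (I : finType) (m1 m2 : {ffun I -> bool} -> R) (i : I) :
  (forall x, 0 <= m1 x) -> (forall x, 0 <= m2 x) -> 0 < \sum_(s : {ffun I -> bool}) m1 s -> 0 < \sum_(s : {ffun I -> bool}) m2 s ->
  (forall a b, m2 a * m1 b <= m2 (fjoin a b) * m1 (fmeet a b)) ->
  (\sum_(s : {ffun I -> bool}) spin (s i) * m1 s) / (\sum_(s : {ffun I -> bool}) m1 s) <= (\sum_(s : {ffun I -> bool}) spin (s i) * m2 s) / (\sum_(s : {ffun I -> bool}) m2 s).
Proof.
move=> h1 h2 t1 t2 H.
have key := @AD R I (fun s => if ~~ s i then m2 s else 0) (fun s => if s i then m1 s else 0)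
  (fun s => if s i then m2 s else 0) (fun s => if ~~ s i then m1 s else 0).
have /key {key} : ADcond (fun s => if ~~ s i then m2 s else 0) (fun s => if s i then m1 s else 0)
  (fun s => if s i then m2 s else 0) (fun s => if ~~ s i then m1 s else 0).
  move=> a b /=; rewrite /fjoin /fmeet !ffunE.
  by case Ea: (a i); case Eb: (b i) => /=; rewrite ?mul0r ?mulr0 ?mulr_ge0 //; exact: H.
have P x (b : bool) (m : {ffun I -> bool} -> R) : (forall x, 0 <= m x) -> 0 <= if b then m x else 0.
  by move=> hm; case: b.
move=> /(_ (fun x => P x _ _ h2) (fun x => P x _ _ h1) (fun x => P x _ _ h2) (fun x => P x _ _ h1)) key.
move: t1 t2; rewrite !split_spin (split_tot i m1) (split_tot i m2).
set p1 := \sum_(s : {ffun I -> bool}) (if s i then m1 s else 0).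
set q1 := \sum_(s : {ffun I -> bool}) (if ~~ s i then m1 s else 0).
set p2 := \sum_(s : {ffun I -> bool}) (if s i then m2 s else 0).
set q2 := \sum_(s : {ffun I -> bool}) (if ~~ s i then m2 s else 0).
move: key; rewrite -/p1 -/q1 -/p2 -/q2 => key t1 t2.
rewrite ler_pdivrMr // mulrAC ler_pdivlMr //.
nra.
Qed.


Definition Eint {R : realType} (S : {fset pt}) (s : config S) : R :=
  \sum_(x : S) \sum_(d <- half_dirs)
        (if shift (val x) d \in S then spin (s x) * sigma_at s (shift (val x) d) else 0).
Definition Bnd {R : realType} (S : {fset pt}) (tau : pt -> bool) (s : config S) : R :=
  \sum_(x : S) \sum_(d <- dirs)
        (if shift (val x) d \notin S then spin (s x) * spin (tau (shift (val x) d)) else 0).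
Definition Fld (R : realType) (h : pt -> R) (N : nat) (Delta Delta' : R) (S : {fset pt}) (t : R) (s : config S) : R :=
  \sum_(x : S) spin (s x) * hfield h N Delta Delta' t (val x).

Lemma ham_split (R : realType) (h : pt -> R) (N : nat) (Delta Delta' : R)
  (S : {fset pt}) (tau : pt -> bool) (t : R) (s : config S) :
  ham h N Delta Delta' tau t s = - (Eint s + Bnd tau s + Fld h N Delta Delta' t s).
Proof. by []. Qed.

Lemma spin4 (R : realType) (p q r u : bool) :
  spin p * spin r + spin q * spin u <= spin (p || q) * spin (r || u) + spin (p && q) * spin (r && u) :> R.
Proof. by case: p; case: q; case: r; case: u; rewrite /spin /=; lra. Qed.

Lemma spinB (R : realType) (p q tp tm : bool) : (tm ==> tp) ->
  spin p * spin tp + spin q * spin tm <= spin (p || q) * spin tp + spin (p && q) * spin tm :> R.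
Proof. by case: p; case: q; case: tp; case: tm; rewrite /spin /= => //; lra. Qed.

Lemma spinF (R : realType) (p q : bool) (k : R) :
  spin (p || q) * k + spin (p && q) * k = spin p * k + spin q * k.
Proof. by case: p; case: q; rewrite /spin /=; ring. Qed.

Lemma Eint_super {R : realType} (S : {fset pt}) (a b : config S) :
  Eint a + Eint b <= Eint (fjoin a b) + Eint (fmeet a b) :> R.
Proof.
rewrite /Eint -!big_split /=; apply: ler_sum => x _.
rewrite -!big_split /=; apply: ler_sum => d _.
case: ifP => _; last by rewrite addr0.
rewrite /sigma_at; case: insub => [y|]; last by rewrite !mulr0 addr0.
by rewrite /fjoin /fmeet !ffunE; apply: spin4.
Qed.

Lemma in_bdry (S : {fset pt}) (x : S) d : d \in dirs -> shift (val x) d \notin S ->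
  shift (val x) d \in bdry S.
Proof.
move=> dd nS; rewrite /bdry mem_undup mem_filter nS /=.
apply: (@allpairs_f _ _ _ shift (enum_fset S) dirs (val x) d) => //; exact: fsvalP.
Qed.

Lemma Bnd_super (R : realType) (S : {fset pt}) (tp tm : pt -> bool) (a b : config S) :
  (forall v, v \in bdry S -> tm v ==> tp v) ->
  Bnd tp a + Bnd tm b <= Bnd tp (fjoin a b) + Bnd tm (fmeet a b) :> R.
Proof.
move=> Ht.
rewrite /Bnd -!big_split /=; apply: ler_sum => x _.
rewrite -!big_split /= big_seq [X in _ <= X]big_seq; apply: ler_sum => d dd.
case: ifP => nS; last by rewrite addr0.
by rewrite /fjoin /fmeet !ffunE; apply: spinB; apply: Ht; apply: in_bdry.
Qed.

Lemma Fld_eq (R : realType) (h : pt -> R) (N : nat) (Delta Delta' : R) (S : {fset pt}) (t : R) (a b : config S) :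
  Fld h N Delta Delta' t (fjoin a b) + Fld h N Delta Delta' t (fmeet a b) =
  Fld h N Delta Delta' t a + Fld h N Delta Delta' t b.
Proof.
rewrite /Fld -!big_split /=; apply: eq_bigr => x _.
by rewrite /fjoin /fmeet !ffunE spinF.
Qed.

Lemma ham_super (R : realType) (h : pt -> R) (N : nat) (Delta Delta' : R)
  (S : {fset pt}) (tp tm : pt -> bool) (t : R) (a b : config S) :
  (forall v, v \in bdry S -> tm v ==> tp v) ->
  ham h N Delta Delta' tp t (fjoin a b) + ham h N Delta Delta' tm t (fmeet a b) <=
  ham h N Delta Delta' tp t a + ham h N Delta Delta' tm t b.
Proof.
move=> Ht; rewrite !ham_split.
have := Eint_super (R:=R) a b; have := @Bnd_super R S tp tm a b Ht; have := Fld_eq h N Delta Delta' t a b.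
lra.
Qed.

Lemma holley_weights (R : realType) (h : pt -> R) (beta : R) (N : nat) (Delta Delta' : R)
  (S : {fset pt}) (tp tm : pt -> bool) (Omp Omm : pred (config S)) (t : R) :
  0 < beta -> (forall v, v \in bdry S -> tm v ==> tp v) ->
  increasing Omp -> decreasing Omm ->
  forall a b : config S,
  (if Omp a then weight beta h N Delta Delta' tp t a else 0) *
  (if Omm b then weight beta h N Delta Delta' tm t b else 0) <=
  (if Omp (fjoin a b) then weight beta h N Delta Delta' tp t (fjoin a b) else 0) *
  (if Omm (fmeet a b) then weight beta h N Delta Delta' tm t (fmeet a b) else 0).
Proof.
move=> bp Ht ip dm a b.
have w0 : forall tau s, 0 <= weight beta h N Delta Delta' tau t s by move=> *; apply: expR_ge0.
case Ea: (Omp a); last by rewrite mul0r; case: ifP; case: ifP; rewrite ?mulr0 ?mul0r ?mulr_ge0.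
case Eb: (Omm b); last by rewrite mulr0; case: ifP; case: ifP; rewrite ?mulr0 ?mul0r ?mulr_ge0.
have -> : Omp (fjoin a b).
  apply: (ip a) => //; apply/forallP => x; rewrite /fjoin ffunE; by case: (a x).
have -> : Omm (fmeet a b).
  apply/negPn/negP => nm.
  have : (predC Omm) b.
    apply: (dm (fmeet a b)) => //; apply/forallP => x; rewrite /fmeet ffunE; by case: (a x); case: (b x).
  by rewrite /= Eb.
rewrite /weight -!expRD ler_expR.
have := ham_super h N Delta Delta' t a b Ht.
nra.
Qed.


Lemma mem_coords (r : nat) (x : int) : (x \in coords r) = (`|x|%N <= r)%N.
Proof.
apply/mapP/idP => [[i]|hx].
  rewrite mem_iota add0n => /andP[_ hi] ->. lia.
exists (absz (x + r%:Z)%R); first by rewrite mem_iota add0n; lia.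
lia.
Qed.

Lemma coords_uniq r : uniq (coords r).
Proof.
rewrite map_inj_uniq ?iota_uniq // => i j /= e. lia.
Qed.

Lemma mem_box r (v : pt) : (v \in box_seq r) = inbox r v.
Proof.
case: v => a b; apply/allpairsP/idP => [[[x y]] /= [hx hy [-> ->]]|].
  by rewrite /inbox /= -!mem_coords hx hy.
by rewrite /inbox /= -!mem_coords => /andP[ha hb]; exists (a, b).
Qed.

Lemma box_uniq r : uniq (box_seq r).
Proof.
apply: allpairs_uniq; try exact: coords_uniq.
by move=> [x y] [x' y'] _ _ /= [-> ->].
Qed.

Lemma box_sum (R : realType) (S : {fset pt}) (r : nat) (F : pt -> R) :
  (forall v, inbox r v -> v \in S) ->
  \sum_(v <- box_seq r) F v = \sum_(x : S | inbox r (val x)) F (val x).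
Proof.
move=> hS; rewrite -big_seq_fsetE /= -[RHS]big_filter.
apply: perm_big; apply: uniq_perm.
- exact: box_uniq.
- by apply: filter_uniq; apply: fset_uniq.
move=> v; rewrite mem_box mem_filter.
by case E: (inbox r v) => //=; rewrite hS.
Qed.

Lemma sub_sum (R : realType) (T : eqType) (l l' : seq T) (g : T -> R) :
  uniq l -> uniq l' -> {subset l <= l'} -> (forall v, v \in l' -> 0 <= g v) ->
  \sum_(v <- l) g v <= \sum_(v <- l') g v.
Proof.
move=> ul ul' sub g0.
rewrite [X in _ <= X](bigID (fun v => v \in l)) /=.
have -> : \sum_(v <- l' | v \in l) g v = \sum_(v <- l) g v.
  rewrite -big_filter; apply: perm_big; apply: uniq_perm => //.
    exact: filter_uniq.
  move=> v; rewrite mem_filter; case E: (v \in l) => //=; exact: sub.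
rewrite lerDl big_seq_cond; apply: sumr_ge0 => v /andP[vl _]; exact: g0.
Qed.

Lemma in_bdry' (S : {fset pt}) (u : pt) d : u \in S -> d \in dirs -> shift u d \notin S ->
  shift u d \in bdry S.
Proof.
move=> uS dd nS; rewrite /bdry mem_undup mem_filter nS /=.
by apply: (@allpairs_f _ _ _ shift (enum_fset S) dirs u d).
Qed.

Lemma shift_inj d : injective (fun u => shift u d).
Proof. by move=> [a b] [a' b'] [] /addIr -> /addIr ->. Qed.

Lemma bdry_count (R : realType) (S : {fset pt}) (g : pt -> R) :
  (forall v, v \in bdry S -> 0 <= g v) ->
  \sum_(x : S) \sum_(d <- dirs) (if shift (val x) d \notin S then g (shift (val x) d) else 0)
  <= 4 * \sum_(v <- bdry S) g v.
Proof.
move=> g0; rewrite exchange_big /=.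
have step : forall d, d \in dirs ->
  \sum_(x : S) (if shift (val x) d \notin S then g (shift (val x) d) else 0) <= \sum_(v <- bdry S) g v.
  move=> d dd; rewrite -big_mkcond /= -(big_seq_fsetE _ _ (fun u => shift u d \notin S) (fun u => g (shift u d))).
  rewrite -big_filter -(big_map (fun u => shift u d) xpredT g).
  apply: sub_sum => //.
  - rewrite map_inj_uniq; last exact: shift_inj.
    by apply: filter_uniq; apply: fset_uniq.
  - exact: undup_uniq.
  - move=> v /mapP [u]; rewrite mem_filter => /andP[nS uS] ->; exact: in_bdry'.
have -> : 4 * \sum_(v <- bdry S) g v = \sum_(d <- dirs) \sum_(v <- bdry S) g v.
  by rewrite /dirs !big_cons big_nil; ring.
by rewrite big_seq [X in _ <= X]big_seq; apply: ler_sum.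
Qed.

Definition Kf (N : nat) (S : {fset pt}) {R : realType} (s : config S) : R :=
  \sum_(x : S | inbox (N %/ 8) (val x)) spin (s x).

Lemma weight_t (R : realType) (h : pt -> R) (beta : R) (N : nat) (Delta Delta' : R)
  (S : {fset pt}) (tau : pt -> bool) (t : R) (s : config S) :
  weight beta h N Delta Delta' tau t s =
  expR (- beta * ham h N Delta Delta' tau 0 s + t * (beta * Delta * Kf N s)).
Proof.
rewrite /weight !ham_split; congr expR.
suff -> : Fld h N Delta Delta' t s = Fld h N Delta Delta' 0 s + t * Delta * Kf N s by ring.
rewrite /Fld /Kf mulr_sumr [X in _ = _ + X]big_mkcond /= -big_split /=; apply: eq_bigr => x _.
rewrite /hfield; case: ifP => _; ring.
Qed.

Definition B0 {R : realType} (S : {fset pt}) (tp tm : pt -> bool) : R :=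
  \sum_(x : S) \sum_(d <- dirs)
     (if shift (val x) d \notin S then spin (tp (shift (val x) d)) - spin (tm (shift (val x) d)) else 0).

Lemma Bnd_diff (R : realType) (S : {fset pt}) (tp tm : pt -> bool) (s : config S) :
  (forall v, v \in bdry S -> tm v ==> tp v) ->
  `|Bnd tp s - Bnd tm s| <= B0 S tp tm :> R.
Proof.
move=> Ht; rewrite /Bnd /B0 -sumrB.
apply: le_trans (ler_norm_sum _ _ _) _; apply: ler_sum => x _.
rewrite -sumrB; apply: le_trans (ler_norm_sum _ _ _) _.
rewrite big_seq [X in _ <= X]big_seq; apply: ler_sum => d dd.
case: ifP => nS; last by rewrite subrr normr0.
have := Ht _ (in_bdry dd nS).
case: (s x); case: (tp _); case: (tm _); rewrite /spin /= => // _.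
all: by rewrite ler_norml; apply/andP; split; lra.
Qed.

Lemma B0_le (R : realType) (S : {fset pt}) (tp tm : pt -> bool) :
  (forall v, v \in bdry S -> tm v ==> tp v) ->
  B0 S tp tm <= 4 * \sum_(v <- bdry S) (spin (tp v) - spin (tm v)) :> R.
Proof.
move=> Ht; apply: (bdry_count (g := fun v => spin (tp v) - spin (tm v))) => v vb.
by have := Ht v vb; case: (tp v); case: (tm v); rewrite /spin //=; lra.
Qed.

Lemma weight_tau (R : realType) (h : pt -> R) (beta : R) (N : nat) (Delta Delta' : R)
  (S : {fset pt}) (tp tm : pt -> bool) (t : R) (s : config S) :
  0 < beta -> (forall v, v \in bdry S -> tm v ==> tp v) ->
  weight beta h N Delta Delta' tp t s <= weight beta h N Delta Delta' tm t s * expR (beta * B0 S tp tm) /\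
  weight beta h N Delta Delta' tm t s <= weight beta h N Delta Delta' tp t s * expR (beta * B0 S tp tm).
Proof.
move=> bp Ht; have := @Bnd_diff R S tp tm s Ht; rewrite ler_norml => /andP[l1 l2].
rewrite /weight -!expRD !ler_expR !ham_split; split; nra.
Qed.


Import numFieldNormedType.Exports.

Lemma is_derive_big (R : realType) (I : Type) (r : seq I) (P : pred I) (F dF : I -> R -> R) (x : R) :
  (forall i, P i -> is_derive x 1 (F i) (dF i x)) ->
  is_derive x 1 (fun t => \sum_(i <- r | P i) F i t) (\sum_(i <- r | P i) dF i x).
Proof.
move=> H; elim: r => [|i r IH].
  rewrite big_nil; under eq_fun do rewrite big_nil. exact: is_derive_cst.
rewrite big_cons; under eq_fun do rewrite big_cons.
case: (boolP (P i)) => Pi.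
  have := is_deriveD (H i Pi) IH. by [].
exact: IH.
Qed.

Lemma derivable_big (R : realType) (I : Type) (r : seq I) (P : pred I) (F : I -> R -> R) (x : R) :
  (forall i, P i -> derivable (F i) x 1) ->
  derivable (fun t => \sum_(i <- r | P i) F i t) x 1.
Proof.
move=> H.
apply: ex_derive.
apply: (@is_derive_big R I r P F (fun i t => 'D_1 (F i) t) x) => i Pi.
apply: derivableP; exact: H.
Qed.

Lemma is_derive_expaff (R : realType) (a b x : R) :
  is_derive x 1 (fun t => expR (a + t * b)) (expR (a + x * b) * b).
Proof.
have h1 : is_derive x 1 (fun t : R => a + t * b) b.
  have h2 : is_derive x 1 (fun t : R => t * b) b.
    have := is_deriveM (is_derive_id x 1) (is_derive_cst b x 1).
    by rewrite scaler0 add0r scaler1.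
  have := is_deriveD (is_derive_cst a x 1) h2.
  by rewrite add0r.
have := @is_derive1_comp R expR (fun t => a + t * b) x _ _ (is_derive_expR (a + x * b)) h1.
by [].
Qed.

Lemma ftc01 (R : realType) (F f : R -> R) :
  (forall t : R, is_derive t (1:R) F (f t)) -> continuous f ->
  (\int[@lebesgue_measure R]_(x in `[0%R, 1%R]) (f x)%:E = (F 1 - F 0)%:E)%E.
Proof.
move=> dF cf.
have cF : continuous F.
  move=> t; apply: differentiable_continuous. apply/derivable1_diffP.
  by case: (dF t).
rewrite (@continuous_FTC2 R f F 0 1) //.
- by apply: continuous_subspaceT.
- split.
  + move=> t _; by case: (dF t).
  + exact: cvg_at_right_filter (cF 0).
  + exact: cvg_at_left_filter (cF 1).
- by move=> t _; rewrite derive1E derive_val.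
Qed.

Lemma int_le01 (R : realType) (f g : R -> R) :
  continuous f -> continuous g -> (forall t, f t <= g t) ->
  (\int[@lebesgue_measure R]_(x in `[0%R, 1%R]) (f x)%:E <=
   \int[@lebesgue_measure R]_(x in `[0%R, 1%R]) (g x)%:E)%E.
Proof.
move=> cf cg fg.
apply: le_integral => //.
- apply: continuous_compact_integrable; first exact: segment_compact.
  exact: continuous_subspaceT.
- apply: continuous_compact_integrable; first exact: segment_compact.
  exact: continuous_subspaceT.
- by move=> x _; rewrite lee_fin.
Qed.

Lemma is_derive_cexp (R : realType) (c a b x : R) :
  is_derive x 1 (fun t => c * expR (a + t * b)) (c * (expR (a + x * b) * b)).
Proof.
have := is_deriveM (is_derive_cst c x 1) (is_derive_expaff a b x).
by rewrite scaler0 addr0.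
Qed.

Definition Zc (R : realType) (T : finType) (P : pred T) (c a b : T -> R) (t : R) : R :=
  \sum_(s | P s) c s * expR (a s + t * b s).

Lemma is_derive_Zc (R : realType) (T : finType) (P : pred T) (c a b : T -> R) (x : R) :
  is_derive x 1 (Zc P c a b) (Zc P (fun s => c s * b s) a b x).
Proof.
rewrite /Zc.
have -> : \sum_(s | P s) c s * b s * expR (a s + x * b s) = \sum_(s | P s) c s * (expR (a s + x * b s) * b s).
  by apply: eq_bigr => s _; ring.
by apply: (@is_derive_big R T (index_enum T) P (fun s t => c s * expR (a s + t * b s)) (fun s t => c s * (expR (a s + t * b s) * b s)) x) => s _; exact: is_derive_cexp.
Qed.

Lemma derivable_Zc (R : realType) (T : finType) (P : pred T) (c a b : T -> R) (x : R) :
  derivable (Zc P c a b) x 1.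
Proof. by case: (is_derive_Zc P c a b x). Qed.

Lemma derivable_cont (R : realType) (f : R -> R) : (forall t, derivable f t 1) -> continuous f.
Proof. by move=> df t; apply: differentiable_continuous; apply/derivable1_diffP. Qed.

Lemma derivable_ratio (R : realType) (T : finType) (P : pred T) (c a b : T -> R) (x : R) :
  Zc P (fun=> 1) a b x != 0 ->
  derivable (fun t => Zc P c a b t / Zc P (fun=> 1) a b t) x 1.
Proof.
move=> nz.
have := derivableM (@derivable_Zc R T P c a b x) (derivableV nz (@derivable_Zc R T P (fun=> 1) a b x)).
by [].
Qed.

Lemma is_derive_lnZ (R : realType) (T : finType) (P : pred T) (a b : T -> R) (x : R) :
  0 < Zc P (fun=> 1) a b x ->
  is_derive x 1 (fun t => ln (Zc P (fun=> 1) a b t))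
     ((Zc P (fun=> 1) a b x)^-1 * Zc P (fun s => 1 * b s) a b x).
Proof.
move=> zp.
have := (@is_derive1_comp R (@ln R) (Zc P (fun=> 1) a b) x _ _ (is_derive1_ln zp) (@is_derive_Zc R T P (fun=> 1) a b x)).
move=> H. exact: H.
Qed.


Section Main.
Context (R : realType) (h : pt -> R) (beta : R) (N : nat) (Delta Delta' : R) (S : {fset pt}).

Definition aF (tau : pt -> bool) (s : config S) : R := - beta * ham h N Delta Delta' tau 0 s.
Definition bF (s : config S) : R := beta * Delta * Kf N s.
Definition ZZ (tau : pt -> bool) (Om : pred (config S)) (t : R) : R := Zc Om (fun=> 1) (aF tau) bF t.
Definition EE (tau : pt -> bool) (Om : pred (config S)) (x : S) (t : R) : R :=
  Zc Om (fun s => spin (s x)) (aF tau) bF t / ZZ tau Om t.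

Lemma sum_w (tau : pt -> bool) (Om : pred (config S)) (t : R) :
  \sum_(s | Om s) weight beta h N Delta Delta' tau t s = ZZ tau Om t.
Proof. by apply: eq_bigr => s _; rewrite weight_t mul1r. Qed.

Lemma ZZ_pos (tau : pt -> bool) (Om : pred (config S)) (t : R) :
  (exists s, Om s) -> 0 < ZZ tau Om t.
Proof.
case=> s0 Os0; rewrite /ZZ /Zc (bigD1 s0) //= mul1r.
set X := \sum_(i | _) _.
have : 0 <= X by apply: sumr_ge0 => s _; rewrite mul1r expR_ge0.
have := expR_gt0 (aF tau s0 + t * bF s0). lra.
Qed.

Lemma mag_E (tau : pt -> bool) (Om : pred (config S)) (t : R) :
  (forall v, inbox (N %/ 32) v -> v \in S) ->
  mag beta h N Delta Delta' tau t Om = \sum_(x : S | inbox (N %/ 32) (val x)) EE tau Om x t.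
Proof.
move=> hS; rewrite /mag (box_sum _ hS); apply: eq_bigr => x _.
rewrite /EE sum_w; congr (_ / _); apply: eq_bigr => s _.
by rewrite weight_t /sigma_at valK.
Qed.
Lemma Zc_mk (tau : pt -> bool) (Om : pred (config S)) (c : config S -> R) (t : R) :
  Zc Om c (aF tau) bF t = \sum_s c s * (if Om s then weight beta h N Delta Delta' tau t s else 0).
Proof.
rewrite /Zc big_mkcond /=; apply: eq_bigr => s _.
by case: (Om s); rewrite ?mulr0 // weight_t.
Qed.

Lemma EE_mono (tp tm : pt -> bool) (Omp Omm : pred (config S)) (x : S) (t : R) :
  0 < beta -> (forall v, v \in bdry S -> tm v ==> tp v) ->
  increasing Omp -> decreasing Omm -> (exists s, Omp s) -> (exists s, Omm s) ->
  EE tm Omm x t <= EE tp Omp x t.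
Proof.
move=> bp Ht ip dm [sp Hp] [sm Hm].
have := @holley_site R S (fun s => if Omm s then weight beta h N Delta Delta' tm t s else 0)
  (fun s => if Omp s then weight beta h N Delta Delta' tp t s else 0) x.
have g0 : forall (O : pred (config S)) tau s, 0 <= if O s then weight beta h N Delta Delta' tau t s else 0.
  by move=> O tau s; case: (O s) => //; apply: expR_ge0.
have tot : forall (O : pred (config S)) tau,
   \sum_s (if O s then weight beta h N Delta Delta' tau t s else 0) = ZZ tau O t.
  by move=> O tau; rewrite /ZZ Zc_mk; apply: eq_bigr => s _; rewrite mul1r.
rewrite !tot /EE !Zc_mk; apply => //.
- by apply: ZZ_pos; exists sm.
- by apply: ZZ_pos; exists sp.
- exact: holley_weights.
Qed.
Lemma lnZZ_derive (tau : pt -> bool) (Om : pred (config S)) (t : R) :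
  (exists s, Om s) ->
  is_derive t 1 (fun u => ln (ZZ tau Om u))
    (beta * Delta * \sum_(x : S | inbox (N %/ 8) (val x)) EE tau Om x t).
Proof.
move=> ne.
have zp := ZZ_pos tau t ne.
have e : Zc Om (fun s => 1 * bF s) (aF tau) bF t =
   beta * Delta * \sum_(x : S | inbox (N %/ 8) (val x)) Zc Om (fun s => spin (s x)) (aF tau) bF t.
  rewrite /Zc /bF /Kf.
  transitivity (\sum_(s | Om s) \sum_(x : S | inbox (N %/ 8) (val x))
      beta * Delta * (spin (s x) * expR (aF tau s + t * (beta * Delta * Kf N s)))).
    apply: eq_bigr => s _; rewrite mul1r -mulrA mulr_suml mulr_sumr; apply: eq_bigr => x _; rewrite /Kf; ring.
  rewrite exchange_big /= mulr_sumr; apply: eq_bigr => x _; rewrite mulr_sumr //.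
have := is_derive_lnZ zp; rewrite e.
suff -> : (ZZ tau Om t)^-1 * (beta * Delta * \sum_(x : S | inbox (N %/ 8) (val x)) Zc Om (fun s => spin (s x)) (aF tau) bF t)
  = beta * Delta * \sum_(x : S | inbox (N %/ 8) (val x)) EE tau Om x t by [].
rewrite /EE -mulr_suml; field; exact: lt0r_neq0.
Qed.
Lemma sum_wT (tau : pt -> bool) (t : R) :
  \sum_(s : config S) weight beta h N Delta Delta' tau t s = ZZ tau (fun _ : config S => true) t.
Proof. by apply: eq_bigr => s _; rewrite weight_t mul1r. Qed.

Lemma ZZ_sub (tau : pt -> bool) (Om : pred (config S)) (t : R) :
  ZZ tau Om t <= ZZ tau (fun _ : config S => true) t.
Proof.
rewrite /ZZ /Zc [X in X <= _]big_mkcond /=; apply: ler_sum => s _.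
by case: (Om s) => //; rewrite mul1r expR_ge0.
Qed.

Lemma ZZ_tau (tp tm : pt -> bool) (t : R) :
  0 < beta -> (forall v, v \in bdry S -> tm v ==> tp v) ->
  ZZ tp (fun _ : config S => true) t <= ZZ tm (fun _ : config S => true) t * expR (beta * B0 S tp tm) /\
  ZZ tm (fun _ : config S => true) t <= ZZ tp (fun _ : config S => true) t * expR (beta * B0 S tp tm).
Proof.
move=> bp Ht; rewrite -!sum_wT !mulr_suml; split; apply: ler_sum => s _.
  by case: (weight_tau h N Delta Delta' t s bp Ht).
by case: (weight_tau h N Delta Delta' t s bp Ht).
Qed.
End Main.

Lemma inbox_mono (r r' : nat) (v : pt) : (r <= r')%N -> inbox r v -> inbox r' v.
Proof. by move=> rr /andP[a b]; rewrite /inbox (leq_trans a rr) (leq_trans b rr). Qed.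

Unset Implicit Arguments.

Theorem lemma3p4 (R : realType) (h : pt -> R) (beta : R) (n : nat)
  (Delta Delta' : R) (S : {fset pt}) (taup taum : pt -> bool)
  (Omp Omm : pred (config S)) :
  0 < beta -> (10 <= n)%N -> 0 < Delta -> 0 <= Delta' ->
  (forall v, v \in S -> inbox (2 ^ n) v) ->
  (forall v, inbox (2 ^ n %/ 8) v -> v \in S) ->
  (forall v, v \in bdry S -> taum v ==> taup v) ->
  (exists s, Omp s) -> increasing Omp ->
  (exists s, Omm s) -> decreasing Omm ->
  (Delta%:E * \int[@lebesgue_measure R]_(t in `[0%R, 1%R])
       (mag beta h (2 ^ n) Delta Delta' taup t Omp
        - mag beta h (2 ^ n) Delta Delta' taum t Omm)%:E
   <= (8 * \sum_(v <- bdry S) (spin (taup v) - spin (taum v))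
       - beta^-1 * (ln (mu beta h (2 ^ n) Delta Delta' taup 0 Omp)
                    + ln (mu beta h (2 ^ n) Delta Delta' taum 1 Omm)))%:E)%E.
Proof.
move=> bp _ Dp _ _ hS8 Ht neP ip neM dm.
set N := (2 ^ n)%N.
have hS32 : forall v, inbox (N %/ 32) v -> v \in S.
  by move=> v /(inbox_mono (leq_div2l _ _ _)) => /(_ 8%N) H; apply: hS8; apply: H.
pose Ep x t := EE h beta N Delta Delta' taup Omp x t.
pose Em x t := EE h beta N Delta Delta' taum Omm x t.
pose G t := \sum_(x : S | inbox (N %/ 8) (val x)) (Ep x t - Em x t).
pose F t := (ln (ZZ h beta N Delta Delta' taup Omp t) - ln (ZZ h beta N Delta Delta' taum Omm t)) * (beta * Delta)^-1.
have bD : 0 < beta * Delta by rewrite mulr_gt0.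
have dF : forall t, is_derive t (1:R) F (G t).
  move=> t.
  have H := is_deriveM (is_deriveB (lnZZ_derive h beta N Delta Delta' taup t neP) (lnZZ_derive h beta N Delta Delta' taum t neM))
     (is_derive_cst (beta * Delta)^-1 t 1).
  suff e : G t = (fun u => ln (ZZ h beta N Delta Delta' taup Omp u) - ln (ZZ h beta N Delta Delta' taum Omm u)) t *: 0 +
     (beta * Delta)^-1 *: (beta * Delta * \sum_(x : S | inbox (N %/ 8) (val x)) EE h beta N Delta Delta' taup Omp x t -
      beta * Delta * \sum_(x : S | inbox (N %/ 8) (val x)) EE h beta N Delta Delta' taum Omm x t).
    by rewrite e.
  rewrite scaler0 add0r /G sumrB -mulrBr /GRing.scale /= mulrA mulVf ?mul1r //.
  exact: lt0r_neq0.
have dE : forall (tau : pt -> bool) (Om : pred (config S)) (x : S) (t : R), (exists s, Om s) -> derivable (EE h beta N Delta Delta' tau Om x) t 1.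
  move=> tau Om x t ne; apply: derivable_ratio.
  by apply: lt0r_neq0; apply: ZZ_pos.
have cG : continuous G.
  apply: derivable_cont => t; rewrite /G.
  apply: (@derivable_big R S (index_enum S) (fun x : S => inbox (N %/ 8) (val x)) (fun x t => Ep x t - Em x t)) => x _.
  have := derivableB (dE taup Omp x t neP) (dE taum Omm x t neM). by [].
have magE : (fun t => mag beta h N Delta Delta' taup t Omp - mag beta h N Delta Delta' taum t Omm) =
   (fun t => \sum_(x : S | inbox (N %/ 32) (val x)) (Ep x t - Em x t)).
  apply: funext => t; rewrite !mag_E // sumrB //.
have cM : continuous (fun t => mag beta h N Delta Delta' taup t Omp - mag beta h N Delta Delta' taum t Omm).
  rewrite magE; apply: derivable_cont => t.
  apply: (@derivable_big R S (index_enum S) (fun x : S => inbox (N %/ 32) (val x)) (fun x t => Ep x t - Em x t)) => x _.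
  have := derivableB (dE taup Omp x t neP) (dE taum Omm x t neM). by [].
have le : forall t, mag beta h N Delta Delta' taup t Omp - mag beta h N Delta Delta' taum t Omm <= G t.
  move=> t; have -> := congr1 (fun f => f t) magE; rewrite /G /=.
  rewrite [X in _ <= X](bigID (fun x : S => inbox (N %/ 32) (val x))) /=.
  have -> : \sum_(i | inbox (N %/ 8) (val i) && inbox (N %/ 32) (val i)) (Ep i t - Em i t) =
            \sum_(i | inbox (N %/ 32) (val i)) (Ep i t - Em i t).
    apply: eq_bigl => x; case E: (inbox (N %/ 32) (val x)); rewrite ?andbF ?andbT //.
    by apply: (inbox_mono _ E); apply: leq_div2l.
  rewrite lerDl; apply: sumr_ge0 => x _; rewrite subr_ge0.
  exact: EE_mono.
have I1 := int_le01 cM cG le.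
have I2 := ftc01 dF cG.
apply: le_trans.
  apply: lee_wpmul2l; first by rewrite lee_fin ltW.
  exact: I1.
rewrite I2 -EFinM lee_fin.
have neT : exists s : config S, (fun _ : config S => true) s by case: neP => s _; exists s.
pose ZZ' (tau : pt -> bool) (Om : pred (config S)) (t : R) := ZZ h beta N Delta Delta' tau Om t.
have Zp : forall (tau : pt -> bool) (Om : pred (config S)) (t : R), (exists s, Om s) -> ZZ' tau Om t \in Num.pos.
  by move=> tau Om t ne; rewrite posrE; apply: ZZ_pos.
have muE : forall (tau : pt -> bool) (Om : pred (config S)) (t : R), (exists s, Om s) ->
   ln (mu beta h N Delta Delta' tau t Om) = ln (ZZ' tau Om t) - ln (ZZ' tau (fun _ => true) t).
  move=> tau Om t ne; rewrite /mu sum_w sum_wT ln_div //; exact: Zp.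
rewrite !muE //.
have a1 : ln (ZZ' taup Omp 1) <= ln (ZZ' taup (fun _ => true) 1).
  by rewrite ler_ln ?Zp //; apply: ZZ_sub.
have b1 : ln (ZZ' taum Omm 0) <= ln (ZZ' taum (fun _ => true) 0).
  by rewrite ler_ln ?Zp //; apply: ZZ_sub.
have [c1 _] := @ZZ_tau R h beta N Delta Delta' S taup taum 1 bp Ht.
have [_ c2] := @ZZ_tau R h beta N Delta Delta' S taup taum 0 bp Ht.
have ep : forall r : R, expR r \in Num.pos by move=> r; rewrite posrE expR_gt0.
have c1' : ln (ZZ' taup (fun _ => true) 1) <= ln (ZZ' taum (fun _ => true) 1) + beta * B0 S taup taum.
  by rewrite -[X in _ + X]expRK -lnM ?Zp // ler_ln ?Zp // rpredM ?Zp.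
have c2' : ln (ZZ' taum (fun _ => true) 0) <= ln (ZZ' taup (fun _ => true) 0) + beta * B0 S taup taum.
  by rewrite -[X in _ + X]expRK -lnM ?Zp // ler_ln ?Zp // rpredM ?Zp.
have e := @B0_le R S taup taum Ht.
have fE : Delta * (F 1 - F 0) = beta^-1 * (ln (ZZ' taup Omp 1) - ln (ZZ' taum Omm 1) - ln (ZZ' taup Omp 0) + ln (ZZ' taum Omm 0)).
  rewrite /F /ZZ'; field; rewrite ?lt0r_neq0 //.
rewrite fE.
move: a1 b1 c1' c2' e.
set D := \sum_(v <- bdry S) _.
set l1p := ln (ZZ' taup Omp 1). set l0p := ln (ZZ' taup Omp 0).
set l1m := ln (ZZ' taum Omm 1). set l0m := ln (ZZ' taum Omm 0).
set t1p := ln (ZZ' taup _ 1). set t0p := ln (ZZ' taup _ 0).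
set t1m := ln (ZZ' taum _ 1). set t0m := ln (ZZ' taum _ 0).
set B := B0 S taup taum.
move=> a1 b1 c1' c2' e.
have XY : (l1p - l1m - l0p + l0m) + (l0p - t0p + (l1m - t1m)) <= 8 * beta * D.
  have : beta * B <= beta * (4 * D) by rewrite ler_pM2l.
  lra.
have ib : 0 <= beta^-1 by rewrite invr_ge0 ltW.
have : beta^-1 * ((l1p - l1m - l0p + l0m) + (l0p - t0p + (l1m - t1m))) <= beta^-1 * (8 * beta * D).
  by apply: ler_wpM2l.
have -> : beta^-1 * (8 * beta * D) = 8 * D by field; rewrite lt0r_neq0.
rewrite mulrDr; lra.
Qed.
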